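(* Let $V\subseteq\{0,1\}^n$ and $\preceq$ a term order on $\mathbb{R}[x_1,\dots,x_n]$. Then $\mathcal{S}_\preceq(V)=\mathcal{S}_\preceq(T_i(V))$ for every $i=1,\dots,n$.
   Context: $T_i$ is the reflection in the hyperplane $\{x_i=\tfrac12\}$, mapping $v\in\{0,1\}^n$ to $(v_1,\dots,v_{i-1},1-v_i,v_{i+1},\dots,v_n)$. $\mathcal{S}_\preceq(V)=\{\tau\subseteq[n]:\prod_{j\in\tau}x_j\notin\mathrm{in}_\preceq(I(V))\}$, where $I(V)$ is the vanishing ideal of $V$ and $\mathrm{in}_\preceq$ the initial ideal. *)

(* Defs.v *)
From HB Require Import structures.
From mathcomp Require Import all_boot all_order all_algebra.
From mathcomp Require Import reals.
From mathcomp Require Import mpoly.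
Set Implicit Arguments. Unset Strict Implicit. Unset Printing Implicit Defensive.
Import Order.TTheory GRing.Theory Num.Theory.
Local Open Scope ring_scope.

Definition cube (n : nat) := {ffun 'I_n -> bool}.

Definition Trefl (n : nat) (i : 'I_n) (v : cube n) : cube n :=
  [ffun j => if j == i then ~~ v j else v j].

Definition TreflS (n : nat) (i : 'I_n) (V : {set cube n}) : {set cube n} :=
  [set Trefl i v | v in V].

Definition pt (R : realType) (n : nat) (v : cube n) : 'I_n -> R :=
  fun j => (v j)%:R.

Definition vanishing (R : realType) (n : nat) (V : {set cube n})
  (p : {mpoly R[n]}) : Prop :=
  forall v, v \in V -> p.@[pt R v] = 0.

Definition term_order (n : nat) (le : rel 'X_{1..n}) : Prop :=
  [/\ reflexive le, antisymmetric le, transitive le & total le] /\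
  (forall m, le 0%MM m) /\
  (forall m1 m2 m3, le m1 m2 -> le (m1 + m3)%MM (m2 + m3)%MM).

Definition is_lead (R : realType) (n : nat) (le : rel 'X_{1..n})
  (p : {mpoly R[n]}) (m : 'X_{1..n}) : Prop :=
  m \in msupp p /\ forall m', m' \in msupp p -> le m' m.

Definition ideal_gen (R : realType) (n : nat) (S : {mpoly R[n]} -> Prop)
  (p : {mpoly R[n]}) : Prop :=
  exists (s : seq ({mpoly R[n]} * {mpoly R[n]})),
    (forall gq, gq \in s -> S gq.2) /\ p = \sum_(gq <- s) gq.1 * gq.2.

Definition initial_ideal (R : realType) (n : nat) (le : rel 'X_{1..n})
  (I : {mpoly R[n]} -> Prop) : {mpoly R[n]} -> Prop :=
  ideal_gen (fun q => exists f m, [/\ I f, f != 0, is_lead le f m & q = 'X_[m]]).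

Definition xsq (R : realType) (n : nat) (tau : {set 'I_n}) : {mpoly R[n]} :=
  \prod_(j in tau) 'X_j.

(* tau belongs to S_le(V) *)
Definition in_std (R : realType) (n : nat) (le : rel 'X_{1..n})
  (V : {set cube n}) (tau : {set 'I_n}) : Prop :=
  ~ initial_ideal le (@vanishing R n V) (@xsq R n tau).

(* Main.v *)
Require Import Defs.
From HB Require Import structures.
From mathcomp Require Import all_boot all_order all_algebra.
From mathcomp Require Import reals.
From mathcomp Require Import mpoly.
From mathcomp Require Import zify.
Set Implicit Arguments. Unset Strict Implicit. Unset Printing Implicit Defensive.
Import Order.TTheory GRing.Theory Num.Theory.
Local Open Scope ring_scope.

Section Aux.
Variable (R : realType) (n : nat).

Definition good (q : {mpoly R[n]}) (m : 'X_{1..n}) : Prop :=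
  q@_m != 0 /\ forall m', m' \in msupp q -> (m' <= m)%MM.

Lemma good_mul q1 q2 m1 m2 : good q1 m1 -> good q2 m2 -> good (q1 * q2) (m1 + m2)%MM.
Proof.
move=> [nz1 s1] [nz2 s2]; split; last first.
  move=> m' /msuppM_le /allpairsP [[a b] /= [ha hb ->]].
  apply/mnm_lepP => j; rewrite !mnmDE.
  move/mnm_lepP: (s1 _ ha) => /(_ j); move/mnm_lepP: (s2 _ hb) => /(_ j).
  by move=> h1 h2; apply: leq_add.
have [r1 r1E] : exists r1, r1 = q1 - q1@_m1 *: 'X_[m1] by eexists.
have -> : q1 = q1@_m1 *: 'X_[m1] + r1 by rewrite r1E addrC subrK.
rewrite mulrDl mcoeffD -scalerAl mcoeffZ.
rewrite (mulrC (mpolyX _ m1) q2) mcoeffMX.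
have -> : (r1 * q2)@_(m1 + m2) = 0.
  apply/memN_msupp_eq0/negP => /msuppM_le /allpairsP [[a b] /= [ha hb]] habE.
  have ha1 : a \in msupp q1.
    rewrite mcoeff_msupp; move: ha; rewrite mcoeff_msupp r1E mcoeffB mcoeffZ mcoeffX.
    have [->|_] := eqVneq m1 a; first by rewrite mulr1 subrr eqxx.
    by rewrite mulr0 subr0.
  have ham : a != m1.
    move: ha; rewrite mcoeff_msupp r1E mcoeffB mcoeffZ mcoeffX.
    by apply: contra => /eqP ->; rewrite eqxx mulr1 subrr eqxx.
  have hle1 := s1 _ ha1; have hle2 := s2 _ hb.
  move/negP: ham; apply; apply/eqP/mnmP => j.
  move/mnm_lepP: hle1 => /(_ j); move/mnm_lepP: hle2 => /(_ j).
  move/(congr1 (fun mm : 'X_{1..n} => mm j)): habE; rewrite !mnmDE.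
  move=> E h2 h1; apply/eqP; rewrite eqn_leq h1 /=.
  lia.
by rewrite addr0 mulf_neq0.
Qed.

Lemma good_exp q m k : good q m -> good (q ^+ k) (m *+ k)%MM.
Proof.
move=> g; elim: k => [|k IH].
  rewrite expr0 mulm0n; split; first by rewrite mcoeff1 eqxx mulr1n oner_neq0.
  by move=> m'; rewrite -mpolyC1 msuppC oner_eq0 inE => /eqP ->; exact: lepm_refl.
by rewrite exprS mulmS; apply: good_mul.
Qed.

Lemma le0mm (m : 'X_{1..n}) : (0 <= m)%MM.
Proof. by apply/mnm_lepP => j; rewrite mnm0E. Qed.

Lemma good_X j : good 'X_j U_(j)%MM.
Proof.
split; first by rewrite mcoeffX eqxx mulr1n oner_neq0.
by move=> m'; rewrite msuppX inE => /eqP ->; exact: lepm_refl.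
Qed.

Lemma good_1X j : good (1 - 'X_j) U_(j)%MM.
Proof.
split.
  rewrite mcoeffB mcoeff1 mcoeffX eqxx.
  have -> : (U_(j)%MM == 0%MM :> 'X_{1..n}) = false by rewrite mnm1_eq0.
  by rewrite sub0r oppr_eq0 oner_neq0.
move=> m' /msuppB_le; rewrite mem_cat msuppX -mpolyC1 msuppC oner_eq0 !inE.
by case/orP => /eqP ->; [exact: le0mm | exact: lepm_refl].
Qed.

Variable (i : 'I_n).

Definition tt : n.-tuple {mpoly R[n]} :=
  [tuple (if j == i then 1 - 'X_j else 'X_j) | j < n].

Definition phi (p : {mpoly R[n]}) := p \mPo tt.

Lemma good_phiX m : good (phi 'X_[m]) m.
Proof.
rewrite /phi comp_mpolyX.
rewrite [X in good _ X](multinomUE_id m).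
apply: (big_ind2 good).
- split; first by rewrite mcoeff1 eqxx mulr1n oner_neq0.
  by move=> m'; rewrite -mpolyC1 msuppC oner_eq0 inE => /eqP ->; exact: lepm_refl.
- by move=> ? ? ? ? ; apply: good_mul.
- move=> j _; apply: good_exp; rewrite tnth_mktuple.
  by case: (j == i); [apply: good_1X | apply: good_X].
Qed.

Variable (le : rel 'X_{1..n}).
Hypothesis hle : term_order le.

Lemma lem_le m1 m2 : (m1 <= m2)%MM -> le m1 m2.
Proof.
case: hle => _ [h0 hadd] h.
rewrite -(submK h); have := hadd _ _ m1 (h0 (m2 - m1)%MM).
by rewrite add0m.
Qed.

Lemma phi_lead p M : is_lead le p M -> is_lead le (phi p) M.
Proof.
case: hle => [[hr ha ht htot] _].
move=> [hM hmax].
have coefE m' : (phi p)@_m' = \sum_(m <- msupp p) p@_m * (phi 'X_[m])@_m'.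
  rewrite /phi comp_mpolyEX raddf_sum /=.
  by apply: eq_bigr => m _; rewrite mcoeffZ.
split.
  rewrite mcoeff_msupp coefE (bigD1_seq M hM (msupp_uniq p)) /=.
  rewrite big1_seq ?addr0.
    by rewrite mulf_neq0 //; [rewrite -mcoeff_msupp | case: (good_phiX M)].
  move=> m /andP [hmM hm].
  case: (boolP (M \in msupp (phi 'X_[m]))) => hin; last first.
    by rewrite (memN_msupp_eq0 hin) mulr0.
  case: (good_phiX m) => _ /(_ _ hin) /lem_le h1.
  have h2 := hmax _ hm.
  by move/eqP: hmM; case; apply: ha; rewrite h1 h2.
move=> m'; rewrite mcoeff_msupp coefE => hnz.
have : has (fun m => (phi 'X_[m])@_m' != 0) (msupp p).
  apply/negPn/negP => /hasPn hall.
  move: hnz; rewrite big1_seq ?eqxx // => m /andP [_ hm].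
  by have /negPn/eqP -> := hall m hm; rewrite mulr0.
case/hasP => m hm hnz'.
have : m' \in msupp (phi 'X_[m]) by rewrite mcoeff_msupp.
case: (good_phiX m) => _ h /h /lem_le h1.
exact: ht h1 (hmax _ hm).
Qed.

Lemma phi_eval p (v : cube n) : (phi p).@[pt R (Trefl i v)] = p.@[pt R v].
Proof.
rewrite /phi comp_mpoly_meval; apply: meval_eq => j.
rewrite tnth_mktuple /pt /Trefl.
have [->|hne] := eqVneq j i; last by rewrite mevalXU ffunE (negbTE hne).
rewrite mevalB meval1 mevalXU ffunE eqxx.
by case: (v i); rewrite /= ?subr0 ?subrr.
Qed.

End Aux.

Lemma Trefl_inv n (i : 'I_n) v : Trefl i (Trefl i v) = v.
Proof. by apply/ffunP => j; rewrite !ffunE; case: eqP => // _; rewrite negbK. Qed.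

Lemma TreflS_inv n (i : 'I_n) V : TreflS i (TreflS i V) = V.
Proof.
rewrite /TreflS -imset_comp.
rewrite (eq_imset _ (fun v => Trefl_inv i v)).
by rewrite imset_id.
Qed.

Lemma gens_sub (R : realType) n (i : 'I_n) (le : rel 'X_{1..n}) (hle : term_order le)
  (V : {set cube n}) (q : {mpoly R[n]}) :
  (exists (f : {mpoly R[n]}) m, [/\ vanishing V f, f != 0, is_lead le f m & q = 'X_[m]]) ->
  (exists (f : {mpoly R[n]}) m, [/\ vanishing (TreflS i V) f, f != 0, is_lead le f m & q = 'X_[m]]).
Proof.
move=> [f [m [hv hnz hl ->]]].
have hl' := phi_lead i hle hl.
exists (phi i f), m; split => //.
- move=> w /imsetP [v hv' ->]; rewrite phi_eval; exact: hv.
- by apply/eqP => h0; case: hl' => /[swap] _; rewrite h0 msupp0.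
Qed.

Lemma ideal_gen_mono (R : realType) n (S1 S2 : {mpoly R[n]} -> Prop) p :
  (forall q, S1 q -> S2 q) -> ideal_gen S1 p -> ideal_gen S2 p.
Proof. by move=> h [s [hs ->]]; exists s; split => // gq /hs /h. Qed.

Theorem lemma2p7 (R : realType) (n : nat) (V : {set cube n})
  (le : rel 'X_{1..n}) (hle : term_order le) (i : 'I_n) :
  forall tau : {set 'I_n},
    @in_std R n le V tau <-> @in_std R n le (TreflS i V) tau.
Proof.
move=> tau; rewrite /in_std /initial_ideal; split => H1 H2; apply: H1.
- apply: ideal_gen_mono H2 => q /(gens_sub i hle); by rewrite TreflS_inv.
- by apply: ideal_gen_mono H2 => q /(gens_sub i hle).
Qed.
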